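(* Let $\mathcal{Y}=\mathbb{R}$, $K\ge1$, and $\alpha\in(0,1)$ with $(1-\alpha)K$ a positive integer. Let $q_k=1/K$ for all $k\in[K]$, and fix integers $n_1,\dots,n_K\ge1$ with $n_1=\min_k n_k$. Let the score function be $s(x,y)=y$, and let $\Pi_1,\dots,\Pi_K$ be distributions on $\mathcal{X}^1\times\mathbb{R}$ whose marginals on the response $Y$ are: $\textnormal{Unif}[0,1]$ for $k=1$; $\textnormal{Unif}[-1,0]$ for $k=2,\dots,(1-\alpha)K$; and $\textnormal{Unif}[1,2]$ for $k=(1-\alpha)K+1,\dots,K$. Suppose calibration data $(X_1,Y_1),\dots,(X_n,Y_n)$, $n=\sum_k n_k$, are generated independently with, for each $k$ and each $i\in\{n_1+\dots+n_{k-1}+1,\dots,n_1+\dots+n_k\}$, $X_i^0=k$ and $(X_i^1,Y_i)\sim\Pi_k$, and an independent test point satisfies $\mathbb{P}\{X^0_{n+1}=k\}=1/K$ and $(X^1_{n+1},Y_{n+1})\mid X^0_{n+1}=k\sim\Pi_k$. Then the GWCP prediction set $\widehat{C}_n$ (defined in the context) satisfies \[\mathbb{P}\{Y_{n+1}\in\widehat{C}_n(X_{n+1})\}=1-\alpha-\frac{1}{K(\min_k n_k+1)}.\]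
   Context: Features are $x=(x^0,x^1)\in[K]\times\mathcal{X}^1$ with $x^0$ the group label. For a probability distribution $\mu$ on $\mathbb{R}\cup\{+\infty\}$ and $\tau\in(0,1]$, $\textnormal{Quantile}_{\tau}(\mu)=\inf\{t\in\mathbb{R}\cup\{+\infty\}:\mu([-\infty,t])\ge\tau\}$; $\delta_s$ is the point mass at $s$. With $s_i=s(X_i,Y_i)$ and $\widehat{P}^{(k)}_{\textnormal{score}}=\frac{1}{n_k}\sum_{i\le n:\,X_i^0=k}\delta_{s_i}$, the GWCP set is $\widehat{C}_n(x)=\{y: s(x,y)\le\widehat{q}\}$ with $\widehat{q}=\textnormal{Quantile}_{1-\alpha}\big(\sum_{k=1}^K q_k\widehat{P}^{(k)}_{\textnormal{score}}\big)$. *)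

(* Defs.v *)
From HB Require Import structures.
From mathcomp Require Import all_boot all_order all_algebra.
From mathcomp Require Import all_classical all_reals all_analysis.
Set Implicit Arguments. Unset Strict Implicit. Unset Printing Implicit Defensive.
Import Order.TTheory GRing.Theory Num.Theory.
Local Open Scope classical_set_scope.
Local Open Scope ring_scope.

Definition pointmass (R : realType) (a : \bar R) (A : set (\bar R)) : \bar R :=
  ((\1_A a : R)%:E).

Definition quantile (R : realType) (tau : R) (mu : set (\bar R) -> \bar R) : \bar R :=
  ereal_inf [set t : \bar R | t != -oo%E /\ (tau%:E <= mu [set x | (x <= t)%E])%E].

(* Calibration data are indexed by group: data k j, j < n k, is the j-th
   calibration point (X^1, Y) of group k. *)
Definition gwcp_mixture (R : realType) (X1 : Type) (K : nat) (n : 'I_K -> nat)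
  (q : 'I_K -> R) (s : 'I_K * X1 -> R -> R)
  (data : forall k : 'I_K, 'I_(n k) -> (X1 * R)%type) : set (\bar R) -> \bar R :=
  fun A => (\sum_(k < K) (q k)%:E *
     ((n k)%:R^-1%:E * \sum_(j < n k) pointmass (s (k, (data k j).1) (data k j).2)%:E A))%E.

Arguments gwcp_mixture {R X1 K} n q s data.

Definition gwcp_qhat (R : realType) (X1 : Type) (K : nat) (n : 'I_K -> nat)
  (q : 'I_K -> R) (alpha : R) (s : 'I_K * X1 -> R -> R)
  (data : forall k : 'I_K, 'I_(n k) -> (X1 * R)%type) : \bar R :=
  quantile (1 - alpha) (gwcp_mixture n q s data).

Arguments gwcp_qhat {R X1 K} n q alpha s data.

Definition gwcp_set (R : realType) (X1 : Type) (K : nat) (n : 'I_K -> nat)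
  (q : 'I_K -> R) (alpha : R) (s : 'I_K * X1 -> R -> R)
  (data : forall k : 'I_K, 'I_(n k) -> (X1 * R)%type) (x : 'I_K * X1) : set R :=
  [set y : R | ((s x y)%:E <= gwcp_qhat n q alpha s data)%E].

Arguments gwcp_set {R X1 K} n q alpha s data x.

Definition unif01 (R : realType) : set R -> \bar R := uniform_prob (@ltr01 R).
Lemma ltrN10' (R : realType) : (-1 : R) < 0. Proof. by rewrite oppr_lt0 ltr01. Qed.
Definition unifN10 (R : realType) : set R -> \bar R := uniform_prob (ltrN10' R).
Lemma ltr12' (R : realType) : (1 : R) < 2. Proof. by rewrite ltrDl ltr01. Qed.
Definition unif12 (R : realType) : set R -> \bar R := uniform_prob (ltr12' R).

(* Mutual independence of the n calibration points Z k j and the test point (G, W):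
   product rule over the generating pi-systems of the individual sigma-fields
   (every measurable B k j for the calibration points, and every event
   {G in S} ∩ {W in C} for the test point). *)
Definition independent_data (R : realType) (d : measure_display) (T : measurableType d)
  (dZ : measure_display) (Zt : measurableType dZ) (P : probability T R)
  (K : nat) (n : 'I_K -> nat) (Z : forall k : 'I_K, 'I_(n k) -> T -> Zt)
  (G : T -> 'I_K) (W : T -> Zt) : Prop :=
  forall (B : forall k : 'I_K, 'I_(n k) -> set Zt) (S : set 'I_K) (C : set Zt),
    (forall k j, measurable (B k j)) -> measurable C ->
    P ((\bigcap_(k in [set: 'I_K]) \bigcap_(j in [set: 'I_(n k)]) (Z k j @^-1` B k j))
        `&` (G @^-1` S) `&` (W @^-1` C))
    = (\prod_(k < K) \prod_(j < n k) P (Z k j @^-1` B k j) * P (G @^-1` S `&` W @^-1` C))%E.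

Arguments independent_data {R d T dZ Zt} P {K} n Z G W.

(* Main.v *)
Require Import Defs.
From HB Require Import structures.
From mathcomp Require Import all_boot all_order all_algebra.
From mathcomp Require Import all_classical all_reals all_analysis.
From mathcomp Require Import ring lra.
From Stdlib Require Import Lia.
From mathcomp Require Import zify.
Import Order.TTheory GRing.Theory Num.Theory.
Local Open Scope classical_set_scope.
Local Open Scope ring_scope.

Section Riemann.
Variable R : realType.

Lemma powdiff_bounds (a b : R) (n : nat) : 0 <= b -> b <= a ->
  n.+1%:R * b ^+ n * (a - b) <= a ^+ n.+1 - b ^+ n.+1 <=
  n.+1%:R * a ^+ n * (a - b).
Proof.
move=> b0 ba; have a0 : 0 <= a by apply: le_trans ba.
have ab0 : 0 <= a - b by rewrite subr_ge0.
rewrite subrXX /= [_ * (a - b)]mulrC [_ * (a - b)]mulrC.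
have Hl : n.+1%:R * b ^+ n <= \sum_(i < n.+1) a ^+ (n - i) * b ^+ i.
  have -> : n.+1%:R * b ^+ n = \sum_(i < n.+1) b ^+ n.
    by rewrite sumr_const card_ord mulr_natl.
  apply: ler_sum => i _.
  have e : n = (n - i + i)%N by rewrite subnK // -ltnS.
  rewrite [in b ^+ n]e exprD ler_wpM2r ?exprn_ge0 //.
  by rewrite lerXn2r // nnegrE.
have Hu : \sum_(i < n.+1) a ^+ (n - i) * b ^+ i <= n.+1%:R * a ^+ n.
  have -> : n.+1%:R * a ^+ n = \sum_(i < n.+1) a ^+ n.
    by rewrite sumr_const card_ord mulr_natl.
  apply: ler_sum => i _.
  have e : n = (n - i + i)%N by rewrite subnK // -ltnS.
  rewrite [in a ^+ n]e exprD ler_wpM2l ?exprn_ge0 //.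
  by rewrite lerXn2r // nnegrE.
by rewrite !ler_wpM2l.
Qed.
End Riemann.


Section Riemann2.
Variable R : realType.

Definition Lsum (n N : nat) : R := \sum_(i < N) (i%:R / N%:R) ^+ n / N%:R.
Definition Usum (n N : nat) : R := \sum_(i < N) (i.+1%:R / N%:R) ^+ n / N%:R.

Lemma riemann_bounds n N : (0 < N)%N ->
  n.+1%:R * Lsum n N <= 1 <= n.+1%:R * Usum n N.
Proof.
move=> N0; have N0' : (0 : R) < N%:R by rewrite ltr0n.
pose F (i : 'I_N) : R := ((i.+1)%:R / N%:R) ^+ n.+1 - (i%:R / N%:R) ^+ n.+1.
have tel : \sum_(i < N) F i = 1 :> R.
  rewrite -(big_mkord xpredT (fun i => ((i.+1)%:R / N%:R) ^+ n.+1 - (i%:R / N%:R) ^+ n.+1)).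
  rewrite (telescope_sumr (fun i => (i%:R / N%:R) ^+ n.+1 : R)) //.
  by rewrite divff ?gt_eqF // expr1n mul0r expr0n subr0.
have Ni : (0 : R) <= N%:R^-1 by rewrite invr_ge0 ltW.
have Hin : forall i : nat, (i%:R : R) <= i.+1%:R by move=> i; rewrite ler_nat.
rewrite /Lsum /Usum !mulr_sumr; apply/andP; split.
  apply: (@le_trans _ _ (\sum_(i < N) F i)); last by rewrite tel.
  apply: ler_sum => i _; rewrite /F.
  have := @powdiff_bounds R (i.+1%:R / N%:R) (i%:R / N%:R) n.
  have -> : (i.+1%:R / N%:R - i%:R / N%:R) = N%:R^-1 :> R.
    by rewrite -mulrBl -natrB // subSnn mul1r.
  move=> H; case/andP: (H (divr_ge0 (ler0n _ _) (ltW N0'))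
     (ler_wpM2r Ni (Hin i))) => [+ _].
  by rewrite mulrA.
apply: (@le_trans _ _ (\sum_(i < N) F i)); first by rewrite tel.
apply: ler_sum => i _; rewrite /F.
have := @powdiff_bounds R (i.+1%:R / N%:R) (i%:R / N%:R) n.
have -> : (i.+1%:R / N%:R - i%:R / N%:R) = N%:R^-1 :> R.
  by rewrite -mulrBl -natrB // subSnn mul1r.
move=> H; case/andP: (H (divr_ge0 (ler0n _ _) (ltW N0'))
   (ler_wpM2r Ni (Hin i))) => [_ +].
by rewrite mulrA.
Qed.
End Riemann2.

Section Riemann3.
Variable R : realType.

Lemma UL_diff n N : (0 < N)%N -> Usum R n N - Lsum R n N <= N%:R^-1.
Proof.
move=> N0; have N0' : (0 : R) < N%:R by rewrite ltr0n.
rewrite /Lsum /Usum -sumrB.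
have -> : \sum_(i < N) ((i.+1%:R / N%:R) ^+ n / N%:R - (i%:R / N%:R) ^+ n / N%:R)
   = \sum_(i < N) (((i.+1%:R / N%:R) ^+ n - (i%:R / N%:R) ^+ n) / N%:R) :> R.
  by apply: eq_bigr => i _; rewrite mulrBl.
rewrite -mulr_suml.
rewrite -(big_mkord xpredT (fun i => ((i.+1%:R / N%:R) ^+ n - (i%:R / N%:R) ^+ n) : R)).
rewrite (telescope_sumr (fun i => (i%:R / N%:R) ^+ n : R)) //.
rewrite divff ?gt_eqF // expr1n mul0r ler_pdivrMr // mulVf ?gt_eqF // lerBlDr lerDl.
Qed.

Lemma riemann_unique n (x : R) :
  (forall N, (0 < N)%N -> Lsum R n N <= x <= Usum R n N) -> x = n.+1%:R^-1.
Proof.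
move=> H.
have Hc : forall N, (0 < N)%N -> `|x - n.+1%:R^-1| <= N%:R^-1.
  move=> N N0; have := @riemann_bounds R n N N0; case/andP: (H N N0) => h1 h2.
  have := @UL_diff n N N0.
  have n0 : (0 : R) < n.+1%:R by rewrite ltr0n.
  move=> d /andP[l1 l2].
  have l1' : Lsum R n N <= n.+1%:R^-1 by rewrite -[n.+1%:R^-1]mulr1 ler_pdivlMl.
  have l2' : n.+1%:R^-1 <= Usum R n N by rewrite -[n.+1%:R^-1]mulr1 ler_pdivrMl.
  clear l1 l2 H; move: d l1' l2' h1 h2.
  set a := Lsum R n N; set b := Usum R n N; set c := n.+1%:R^-1; set e := N%:R^-1.
  move=> *; rewrite ler_norml; apply/andP; split; lra.
apply/eqP; rewrite -subr_eq0; apply/negPn/negP => ne.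
have d0 : 0 < `|x - n.+1%:R^-1| by rewrite normr_gt0.
set d := `|x - n.+1%:R^-1| in d0 Hc.
have hd : 0 <= d^-1 by rewrite invr_ge0 ltW.
have := archi_boundP hd; set M := Num.Def.archi_bound _ => hM.
have := Hc M.+1 isT.
have M0 : (0 : R) < M.+1%:R by rewrite ltr0n.
rewrite -(lef_pV2 (y := d)) ?posrE ?invr_gt0 // invrK => hM2.
have : (M%:R : R) < M.+1%:R by rewrite ltr_nat.
lra.
Qed.
End Riemann3.


Section Quant.
Variables (R : realType) (K : nat) (n : 'I_K -> nat).

Lemma indic_iff (T : Type) (A B : set T) (x : T) : (A x <-> B x) -> \1_A x = \1_B x :> R.
Proof.
move=> h; rewrite !indicE; case: (boolP (x \in A)) => hA.
  by rewrite mem_set //; apply/h; apply: set_mem.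
rewrite memNset // => /h hB; move/negP: hA; apply; exact: mem_set.
Qed.

Definition Fr (yv : forall k : 'I_K, 'I_(n k) -> R) (A : set (\bar R)) : R :=
  \sum_(k < K) K%:R^-1 * ((n k)%:R^-1 * \sum_(j < n k) \1_A ((yv k j)%:E)).

Lemma mix_Fr (X1 : Type) (data : forall k : 'I_K, 'I_(n k) -> (X1 * R)%type) A :
  gwcp_mixture n (fun _ => K%:R^-1) (fun x y => y) data A
  = (Fr (fun k j => (data k j).2) A)%:E.
Proof.
rewrite /gwcp_mixture /Fr -sumEFin; apply: eq_bigr => k _.
by rewrite /pointmass sumEFin -!EFinM.
Qed.

Lemma Fr_mono yv A B : A `<=` B -> Fr yv A <= Fr yv B.
Proof.
move=> AB; apply: ler_sum => k _; apply: ler_wpM2l; first by rewrite invr_ge0.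
apply: ler_wpM2l; first by rewrite invr_ge0.
apply: ler_sum => j _; rewrite !indicE.
case: (boolP (_ \in A)) => [/set_mem/AB/mem_set -> //|_].
by rewrite ler0n.
Qed.

Lemma Fr_ge0 yv A : 0 <= Fr yv A.
Proof.
apply: sumr_ge0 => k _; apply: mulr_ge0; first by rewrite invr_ge0.
apply: mulr_ge0; first by rewrite invr_ge0.
by apply: sumr_ge0 => j _; rewrite indicE ler0n.
Qed.

Lemma quantile_char yv (tau y : R) : 0 < tau ->
  (y%:E <= quantile tau (fun A => (Fr yv A)%:E))%E <->
  Fr yv [set x | (x < y%:E)%E] < tau.
Proof.
move=> tau0; split.
  move=> Hq; rewrite ltNge; apply/negP => Hge.
  pose t : \bar R := \big[Order.max/-oo%E]_(k < K) \big[Order.max/-oo%E]_(j < n k)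
     (if yv k j < y then (yv k j)%:E else -oo%E).
  have tlt : (t < y%:E)%E.
    rewrite /t; apply: bigmax_lt; first exact: ltNyr.
    move=> k _; apply: bigmax_lt; first exact: ltNyr.
    by move=> j _; case: ifP => [h|_]; [rewrite lte_fin | exact: ltNyr].
  have key : forall k j, ((yv k j)%:E <= t)%E = (yv k j < y).
    move=> k j; case: (boolP (yv k j < y)) => h.
      apply: (le_trans _ (le_bigmax _ _ k)).
      by apply: (le_trans _ (le_bigmax _ _ j)); rewrite h.
    apply/negbTE; rewrite -ltNge; apply: (lt_le_trans tlt).
    by rewrite lee_fin leNgt.
  have FE : Fr yv [set x | (x <= t)%E] = Fr yv [set x | (x < y%:E)%E].
    apply: eq_bigr => k _; congr (_ * (_ * _)); apply: eq_bigr => j _.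
    by apply: indic_iff => /=; rewrite key lte_fin.
  have tS : t != -oo%E.
    apply/negP => /eqP t_oo.
    have : Fr yv [set x | (x <= t)%E] = 0.
      apply: big1 => k _; apply/eqP; rewrite mulf_eq0; apply/orP; right.
      rewrite mulf_eq0; apply/orP; right; apply/eqP; apply: big1 => j _.
      by rewrite indicE memNset //= t_oo leeNy_eq.
    by rewrite FE => h0; move: Hge; rewrite h0 leNgt tau0.
  have : (quantile tau (fun A => (Fr yv A)%:E) <= t)%E.
    apply: ereal_inf_lbound; split => //; by rewrite FE lee_fin.
  by move=> h; have := le_lt_trans (le_trans Hq h) tlt; rewrite ltxx.
move=> Hlt; apply/ereal_infP => t [tNy].
rewrite lee_fin => Ht; rewrite leNgt; apply/negP => ty.
have : Fr yv [set x | (x <= t)%E] <= Fr yv [set x | (x < y%:E)%E].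
  by apply: Fr_mono => x /= xt; apply: le_lt_trans ty.
lra.
Qed.
End Quant.


Section Unif.
Variable R : realType.

Lemma uniform_itv (a b : R) (ab : a < b) (b1 b2 : bool) (lo hi : R) :
  a <= lo -> lo <= hi -> hi <= b ->
  uniform_prob ab [set` Interval (BSide b1 lo) (BSide b2 hi)] = ((hi - lo) / (b - a))%:E.
Proof.
move=> alo lohi hib; rewrite /uniform_prob.
rewrite (eq_integral (fun=> (b - a)^-1%:E)); last first.
  move=> x; rewrite inE /= in_itv /= /uniform_pdf.
  by case: b1; case: b2 => /= /andP[h1 h2]; rewrite ifT //; apply/andP; split; lra.
rewrite integral_cst //= lebesgue_measure_itv /=.
rewrite lte_fin; case: ltP => h.
  by rewrite -EFinD -EFinM mulrC.
have -> : hi = lo by apply/eqP; rewrite eq_le lohi h.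
by rewrite subrr mul0r mule0.
Qed.

Lemma uniform_itv1 (a b : R) (ab : a < b) (b1 b2 : bool) :
  uniform_prob ab [set` Interval (BSide b1 a) (BSide b2 b)] = 1%:E.
Proof.
by rewrite uniform_itv ?lexx ?(ltW ab) // divff // subr_eq0 gt_eqF.
Qed.
End Unif.


Section Main.
Variables (R : realType) (d : measure_display) (T : measurableType d) (P : probability T R)
  (d1 : measure_display) (X1 : measurableType d1)
  (K : nat) (hK : (0 < K)%N) (alpha : R) (halpha : 0 < alpha < 1)
  (m : nat) (hm : (0 < m)%N) (hmK : (1 - alpha) * K%:R = m%:R)
  (n : 'I_K -> nat) (hn : forall k, (0 < n k)%N)
  (k1 : 'I_K) (hk1 : nat_of_ord k1 = 0%N) (hmin : forall k, (n k1 <= n k)%N)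
  (Pi : 'I_K -> probability (X1 * R)%type R)
  (hPi1 : forall B, measurable B -> Pi k1 (setT `*` B) = unif01 B)
  (hPi2 : forall (k : 'I_K) B, (1 <= k < m)%N -> measurable B ->
            Pi k (setT `*` B) = unifN10 B)
  (hPi3 : forall (k : 'I_K) B, (m <= k)%N -> measurable B ->
            Pi k (setT `*` B) = unif12 B)
  (Z : forall k : 'I_K, 'I_(n k) -> T -> (X1 * R)%type)
  (G : T -> 'I_K) (W : T -> (X1 * R)%type)
  (hZmeas : forall k j, measurable_fun setT (Z k j))
  (hGmeas : forall k, measurable (G @^-1` [set k]))
  (hWmeas : measurable_fun setT W)
  (hZlaw : forall k j A, measurable A -> P (Z k j @^-1` A) = Pi k A)
  (hGlaw : forall k, P (G @^-1` [set k]) = (K%:R^-1)%:E)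
  (hWlaw : forall k A, measurable A ->
            P (G @^-1` [set k] `&` W @^-1` A) = ((K%:R^-1)%:E * Pi k A)%E)
  (hind : independent_data P n Z G W).

Lemma k1E k : (k == k1) = ((k : nat) == 0%N).
Proof. by rewrite -hk1; apply/eqP/eqP => [->|h] //; apply: val_inj. Qed.

Lemma mleK : (m < K)%N.
Proof.
have : (m%:R : R) < K%:R.
  rewrite -hmK; case/andP: halpha => a0 a1.
  have K0 : (0 : R) < K%:R by rewrite ltr0n.
  by rewrite gtr_pMl // ltrBlDr ltrDl.
by rewrite ltr_nat.
Qed.

Lemma k1m : (k1 < m)%N.
Proof. by rewrite hk1. Qed.

Definition rng (k : 'I_K) : set R :=
  if (k : nat) == 0%N then [set` (`[0, 1] : interval R)] else if (k < m)%N then [set` (`[-1, 0] : interval R)] else [set` (`[1, 2] : interval R)].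
Definition trng (k : 'I_K) : set R :=
  if (k : nat) == 0%N then [set` (`]0, 1[ : interval R)] else if (k < m)%N then [set` (`[-1, 0] : interval R)] else [set` (`]1, 2] : interval R)].

Lemma mrng k : measurable (rng k).
Proof. by move=> h; move: h; rewrite /rng; case: ifP => _; [|case: ifP => _]; exact: measurable_itv. Qed.
Lemma mtrng k : measurable (trng k).
Proof. by move=> h; move: h; rewrite /trng; case: ifP => _; [|case: ifP => _]; exact: measurable_itv. Qed.

Lemma Pi_gen (k : 'I_K) (B : set R) :
  measurable B ->
  ((k : nat) == 0%N -> unif01 B = 1%:E) ->
  ((k : nat) != 0%N -> (k < m)%N -> unifN10 B = 1%:E) ->
  ((m <= k)%N -> unif12 B = 1%:E) ->
  Pi k (setT `*` B) = 1%:E.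
Proof.
move=> mB h1 h2 h3; case: (boolP ((k : nat) == 0%N)) => k0.
  have kk : k = k1 by apply/eqP; rewrite k1E.
  by rewrite kk hPi1 // h1.
case: (ltnP k m) => km; last by rewrite hPi3 // h3.
by rewrite hPi2 ?h2 // km andbT lt0n.
Qed.

Lemma Pi_rng k : Pi k (setT `*` rng k) = 1%:E.
Proof.
apply: (@Pi_gen k _ (mrng k)) => [k0|k0 km|mk].
- by rewrite /rng k0 /unif01 uniform_itv1.
- by rewrite /rng (negbTE k0) km /unifN10 uniform_itv1.
- have k0 : (k : nat) != 0%N by rewrite -lt0n (leq_trans hm mk).
  by rewrite /rng (negbTE k0) ltnNge mk /unif12 uniform_itv1.
Qed.

Lemma Pi_trng k : Pi k (setT `*` trng k) = 1%:E.
Proof.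
apply: (@Pi_gen k _ (mtrng k)) => [k0|k0 km|mk].
- by rewrite /trng k0 /unif01 uniform_itv1.
- by rewrite /trng (negbTE k0) km /unifN10 uniform_itv1.
- have k0 : (k : nat) != 0%N by rewrite -lt0n (leq_trans hm mk).
  by rewrite /trng (negbTE k0) ltnNge mk /unif12 uniform_itv1.
Qed.

Definition Good := \bigcap_(k in [set: 'I_K]) \bigcap_(j in [set: 'I_(n k)])
   (Z k j @^-1` (setT `*` rng k)).
Definition Hk (g : 'I_K) := Good `&` (G @^-1` [set g]) `&` (W @^-1` (setT `*` trng g)).

Lemma mpre k j A : measurable A -> measurable (Z k j @^-1` A).
Proof. by move=> mA; rewrite -[X in measurable X]setTI; apply: hZmeas. Qed.
Lemma mpreW A : measurable A -> measurable (W @^-1` A).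
Proof. by move=> mA; rewrite -[X in measurable X]setTI; apply: hWmeas. Qed.

Lemma mGood : measurable Good.
Proof.
apply: fin_bigcap_measurable; first exact: finite_finset.
move=> k _; apply: fin_bigcap_measurable; first exact: finite_finset.
by move=> j _; apply: mpre; apply: measurableX => //; exact: mrng.
Qed.

Lemma mHk g : measurable (Hk g).
Proof.
apply: measurableI; first by apply: measurableI; [exact: mGood| exact: hGmeas].
by apply: mpreW; apply: measurableX => //; exact: mtrng.
Qed.

Lemma PHk g : P (Hk g) = (K%:R^-1)%:E.
Proof.
rewrite /Hk /Good (hind (fun k j => setT `*` rng k) [set g] (setT `*` trng g)); last 2 first.
- by move=> k j; apply: measurableX => //; exact: mrng.
- by apply: measurableX => //; exact: mtrng.
rewrite hWlaw; last by apply: measurableX => //; exact: mtrng.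
rewrite Pi_trng mule1 big1 ?mul1e // => k _; apply: big1 => j _.
by rewrite hZlaw ?Pi_rng //; apply: measurableX => //; exact: mrng.
Qed.


Lemma null_red (D H E : set T) : measurable D -> measurable H -> measurable E ->
  H `<=` D -> P H = P D -> P (E `&` D) = P (E `&` H).
Proof.
move=> mD mH mE HD PHD.
have -> : E `&` D = (E `&` H) `|` (E `&` (D `\` H)).
  apply/seteqP; split => w /=.
    by case=> Ew Dw; case: (pselect (H w)) => Hw; [left|right].
  by case=> [[Ew Hw]|[Ew [Dw _]]]; split => //; apply: HD.
have m1 : measurable (E `&` H) by apply: measurableI.
have m2 : measurable (E `&` (D `\` H)) by apply: measurableI => //; apply: measurableD.
rewrite measureU //; last first.
  by apply/seteqP; split => w //= [[_ Hw] [_ [_ nHw]]].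
have PDfin : (P D < +oo)%E by apply: (le_lt_trans (probability_le1 P mD)); rewrite ltry.
have hDH : P (D `\` H) = 0%E.
  rewrite measureD // (_ : D `&` H = H); last by apply/seteqP; split => w /=; [case | move=> Hw; split => //; apply: HD].
  rewrite [X in (_ - X)%E](_ : _ = P D); last exact: PHD.
  by rewrite subee // ge0_fin_numE ?measure_ge0.
have hle : (P (E `&` (D `\` H)) <= P (D `\` H))%E.
  apply: le_measure; rewrite ?inE //; try exact: measurableD; by move=> w [].
rewrite [X in (_ + X)%E](_ : _ = 0%E) ?adde0 //.
by apply/eqP; rewrite eq_le measure_ge0 andbT -hDH.
Qed.

Lemma bigsetU_mem (U : Type) (N : nat) (F : 'I_N -> set U) x :
  (\big[setU/set0]_(i < N) F i) x <-> exists i, F i x.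
Proof.
split.
  elim/big_ind: _ => //; first by move=> A B hA hB [/hA|/hB].
  by move=> i _ h; exists i.
by move=> [i Fi]; rewrite (bigD1 i) //=; left.
Qed.


Definition yk k j w := (Z k j w).2.
Definition Yt w := (W w).2.
Definition Fl w := Fr R K n (fun k j => yk k j w) [set x | (x < (Yt w)%:E)%E].
Definition Ev := [set w | Fl w < 1 - alpha].

Lemma tau_pos : 0 < 1 - alpha.
Proof. by case/andP: halpha => _ a1; rewrite subr_gt0. Qed.

Lemma E_eq : [set w | (W w).2 \in gwcp_set n (fun _ => K%:R^-1) alpha (fun x y => y)
       (fun k j => Z k j w) (G w, (W w).1)] = Ev.
Proof.
apply/seteqP; split => w /=; rewrite /gwcp_set /gwcp_qhat.
  rewrite in_setE /= (_ : gwcp_mixture _ _ _ _ = fun A => (Fr R K n (fun k j => (Z k j w).2) A)%:E).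
    by move/(@quantile_char R K n _ _ _ tau_pos).
  by apply/funext => A; rewrite mix_Fr.
move=> h; rewrite in_setE /= (_ : gwcp_mixture _ _ _ _ = fun A => (Fr R K n (fun k j => (Z k j w).2) A)%:E).
  exact/(@quantile_char R K n _ _ _ tau_pos).
by apply/funext => A; rewrite mix_Fr.
Qed.

Lemma mtrue : measurable [set true].
Proof. by []. Qed.

Definition Lt k j := [set w | yk k j w < Yt w].

Lemma myk k j : measurable_fun setT (yk k j).
Proof. exact: measurableT_comp measurable_snd (hZmeas k j). Qed.
Lemma mYt : measurable_fun setT Yt.
Proof. exact: measurableT_comp measurable_snd hWmeas. Qed.

Lemma mLt k j : measurable (Lt k j).
Proof.
have := measurable_realfun.measurable_fun_ltr (myk k j) mYt measurableT mtrue.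
by rewrite setTI.
Qed.

Lemma Fl_eq w : Fl w = \sum_(k < K) K%:R^-1 * ((n k)%:R^-1 * \sum_(j < n k) \1_(Lt k j) w).
Proof.
apply: eq_bigr => k _; congr (_ * (_ * _)); apply: eq_bigr => j _.
Qed.

Lemma mEv : measurable Ev.
Proof.
have mF : measurable_fun setT Fl.
  rewrite (_ : Fl = fun w => \sum_(k < K) K%:R^-1 * ((n k)%:R^-1 * \sum_(j < n k) \1_(Lt k j) w)); last first.
    by apply/funext => w; rewrite Fl_eq.
  apply: measurable_sum => k; apply: measurable_realfun.measurable_funM => //.
  apply: measurable_realfun.measurable_funM => //; apply: measurable_sum => j.
  exact: measurable_realfun.measurable_indic (mLt k j).
have := measurable_realfun.measurable_fun_ltr mF (measurable_cst (1 - alpha)) measurableT mtrue.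
by rewrite setTI.
Qed.


Lemma cnt_min (N M : nat) : (\sum_(k < N) ((k < M)%N : nat))%N = minn N M.
Proof.
rewrite -(big_mkord xpredT (fun k => ((k < M)%N : nat))).
elim: N => [|N IH]; first by rewrite big_nil min0n.
rewrite big_nat_recr //= IH; case: (ltnP N M) => h /=; lia.
Qed.

Lemma cnt1 : \sum_(k < K) ((k < m)%N)%:R = m%:R :> R.
Proof.
rewrite -natr_sum cnt_min; congr (_%:R); apply/minn_idPr; exact: ltnW mleK.
Qed.

Lemma cnt2 : \sum_(k < K | k != k1) ((k < m)%N)%:R = m%:R - 1 :> R.
Proof.
have := cnt1; rewrite (bigD1 k1) //= k1m => <-.
by rewrite addrC addrK.
Qed.

Definition t k w := (n k)%:R^-1 * \sum_(j < n k) \1_(Lt k j) w :> R.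

Lemma t_ge0 k w : 0 <= t k w.
Proof.
apply: mulr_ge0; first by rewrite invr_ge0.
by apply: sumr_ge0 => j _; rewrite indicE ler0n.
Qed.

Lemma nk0 k : (0 : R) < (n k)%:R.
Proof. by rewrite ltr0n. Qed.

Lemma t_le1 k w : t k w <= 1.
Proof.
rewrite /t ler_pdivrMl ?nk0 // mulr1.
have -> : (n k)%:R = \sum_(j < n k) (1 : R) by rewrite sumr_const card_ord.
by apply: ler_sum => j _; rewrite indicE; case: (_ \in _).
Qed.

Lemma t_all1 k w : (forall j, Lt k j w) -> t k w = 1.
Proof.
move=> h; rewrite /t (eq_bigr (fun=> 1)); last by move=> j _; rewrite indicE mem_set.
by rewrite sumr_const card_ord mulVf // gt_eqF ?nk0.
Qed.

Lemma t_all0 k w : (forall j, ~ Lt k j w) -> t k w = 0.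
Proof.
move=> h; rewrite /t big1 ?mulr0 // => j _; by rewrite indicE memNset.
Qed.

Lemma t_lt1 k w : t k w < 1 <-> exists j, ~ Lt k j w.
Proof.
split.
  move=> h; apply: contrapT => hnn.
  have : t k w = 1 by apply: t_all1 => j; apply: contrapT => hj; apply: hnn; exists j.
  by move=> e; move: h; rewrite e ltxx.
move=> [j hj]; rewrite /t ltr_pdivrMl ?nk0 // mulr1.
rewrite (bigD1 j) //= indicE memNset // add0r.
have hle : \sum_(i < n k | i != j) \1_(Lt k i) w <= \sum_(i < n k | i != j) (1 : R).
  by apply: ler_sum => i _; rewrite indicE; case: (_ \in _).
apply: (le_lt_trans hle); rewrite sumr_const.
rewrite ltr_nat (_ : #|_| = #|predC1 j|) // cardC1 card_ord.
by rewrite ltn_predL hn.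
Qed.

Lemma Fl_t w : Fl w = K%:R^-1 * \sum_(k < K) t k w.
Proof. by rewrite Fl_eq mulr_sumr. Qed.

Lemma tauE : 1 - alpha = m%:R / K%:R.
Proof. by rewrite -hmK mulfK // gt_eqF // ltr0n. Qed.

Lemma Ev_t w : Ev w <-> \sum_(k < K) t k w < m%:R.
Proof.
rewrite /Ev /= Fl_t tauE mulrC ltr_pM2r // invr_gt0 ltr0n //.
Qed.


Lemma Hk_prop (g : 'I_K) w : Hk g w ->
  (forall k j, rng k (yk k j w)) /\ G w = g /\ trng g (Yt w).
Proof.
rewrite /Hk /Good => -[[HG Gw] Ww]; split; last by split => //; case: Ww.
by move=> k j; have [] := HG k I j I.
Qed.

Lemma rng_val {k : 'I_K} {y : R} : rng k y ->
  if (k : nat) == 0%N then 0 <= y <= 1 else if (k < m)%N then -1 <= y <= 0 else 1 <= y <= 2.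
Proof. by move=> h; move: h; rewrite /rng; case: ifP => _; [|case: ifP => _]; rewrite /= in_itv. Qed.

Lemma trng_val {k : 'I_K} {y : R} : trng k y ->
  if (k : nat) == 0%N then 0 < y < 1 else if (k < m)%N then -1 <= y <= 0 else 1 < y <= 2.
Proof. by move=> h; move: h; rewrite /trng; case: ifP => _; [|case: ifP => _]; rewrite /= in_itv. Qed.

Lemma sum_split w : \sum_(k < K) t k w = t k1 w + \sum_(k < K | k != k1) t k w.
Proof. by rewrite (bigD1 k1). Qed.

Lemma case_lower (g : 'I_K) w : (g : nat) != 0%N -> (g < m)%N -> Hk g w -> Ev w.
Proof.
move=> g0 gm /Hk_prop [hr [Gw hY]]; apply/Ev_t.
have := trng_val hY; rewrite (negbTE g0) gm => /andP[Y1 Y2].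
rewrite sum_split.
have -> : t k1 w = 0.
  apply: t_all0 => j; rewrite /Lt /=.
  have := rng_val (hr k1 j); rewrite hk1 eqxx => /andP[y1 y2]; lra.
rewrite add0r; apply: (le_lt_trans (y := m%:R - 1)); last by lra.
rewrite -cnt2; apply: ler_sum => k kk1.
case: (ltnP k m) => km; first exact: t_le1.
rewrite le_eqVlt; apply/orP; left; apply/eqP; apply: t_all0 => j; rewrite /Lt /=.
have k0 : (k : nat) != 0%N by rewrite -k1E.
have := rng_val (hr k j); rewrite (negbTE k0) ltnNge km /= => /andP[y1 y2]; lra.
Qed.

Lemma case_upper (g : 'I_K) w : (m <= g)%N -> Hk g w -> ~ Ev w.
Proof.
move=> mg /Hk_prop [hr [Gw hY]]; rewrite Ev_t.
have g0 : (g : nat) != 0%N by rewrite -lt0n (leq_trans hm mg).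
have := trng_val hY; rewrite (negbTE g0) ltnNge mg /= => /andP[Y1 Y2].
apply/negP; rewrite -leNgt -cnt1; apply: ler_sum => k _.
case: (ltnP k m) => km; last exact: t_ge0.
rewrite t_all1 // => j; rewrite /Lt /=.
have := rng_val (hr k j); case: ifP => _; last rewrite km.
  by move=> /andP[y1 y2]; lra.
by move=> /andP[y1 y2]; lra.
Qed.

Lemma case_k1 w : Hk k1 w -> (Ev w <-> exists j, ~ Lt k1 j w).
Proof.
move=> /Hk_prop [hr [Gw hY]]; rewrite Ev_t -t_lt1.
have := trng_val hY; rewrite hk1 /= => /andP[Y1 Y2].
rewrite sum_split.
have -> : \sum_(k < K | k != k1) t k w = m%:R - 1.
  rewrite -cnt2; apply: eq_bigr => k kk1.
  have k0 : (k : nat) != 0%N by rewrite -k1E.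
  case: (ltnP k m) => km.
    rewrite t_all1 // => j; rewrite /Lt /=.
    have := rng_val (hr k j); rewrite (negbTE k0) km => /andP[y1 y2]; lra.
  rewrite t_all0 // => j; rewrite /Lt /=.
  have := rng_val (hr k j); rewrite (negbTE k0) ltnNge km /= => /andP[y1 y2]; lra.
split => h; lra.
Qed.


Definition Tset := \bigcap_(j in [set: 'I_(n k1)]) Lt k1 j.

Lemma mTset : measurable Tset.
Proof. by apply: fin_bigcap_measurable; [exact: finite_finset | move=> j _; exact: mLt]. Qed.

Definition Bc (c : R) (k : 'I_K) : set R :=
  if (k : nat) == 0%N then [set` (`[0, c[ : interval R)] else rng k.

Definition Rect (c a b : R) :=
  (\bigcap_(k in [set: 'I_K]) \bigcap_(j in [set: 'I_(n k)]) (Z k j @^-1` (setT `*` Bc c k)))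
  `&` (G @^-1` [set k1]) `&` (W @^-1` (setT `*` [set` (`[a, b[ : interval R)])).

Lemma mBc c k : measurable (Bc c k).
Proof. by rewrite /Bc; case: ifP => _; [exact: measurable_itv | exact: mrng]. Qed.

Lemma mRect c a b : measurable (Rect c a b).
Proof.
apply: measurableI; first apply: measurableI.
- apply: fin_bigcap_measurable; first exact: finite_finset.
  move=> k _; apply: fin_bigcap_measurable; first exact: finite_finset.
  by move=> j _; apply: mpre; apply: measurableX => //; exact: mBc.
- exact: hGmeas.
- by apply: mpreW; apply: measurableX => //; exact: measurable_itv.
Qed.

Lemma PRect c a b : 0 <= c -> c <= 1 -> 0 <= a -> a <= b -> b <= 1 ->
  P (Rect c a b) = ((c ^+ n k1) * (K%:R^-1 * (b - a)))%:E.
Proof.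
move=> c0 c1 a0 ab b1.
rewrite /Rect (hind (fun k j => setT `*` Bc c k) [set k1]
   (setT `*` [set` (`[a, b[ : interval R)])); last 2 first.
- by move=> k j; apply: measurableX => //; exact: mBc.
- by apply: measurableX => //; exact: measurable_itv.
rewrite hWlaw; last by apply: measurableX => //; exact: measurable_itv.
rewrite hPi1; last exact: measurable_itv.
rewrite /unif01 uniform_itv // subr0 divr1.
rewrite (bigD1 k1) //= [X in (_ * X * _)%E]big1 ?mule1; last first.
  move=> k kk1; apply: big1 => j _.
  have k0 : (k : nat) != 0%N by rewrite -k1E.
  rewrite hZlaw; last by apply: measurableX => //; exact: mBc.
  by rewrite /Bc (negbTE k0) Pi_rng.
rewrite (eq_bigr (fun=> c%:E)); last first.
  move=> j _; rewrite hZlaw; last by apply: measurableX => //; exact: mBc.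
  rewrite /Bc hk1 eqxx hPi1; last exact: measurable_itv.
  by rewrite /unif01 uniform_itv // !subr0 divr1.
by rewrite prodEFin prodr_const card_ord -EFinM.
Qed.


Lemma N_pos N (i : 'I_N) : (0 : R) < N%:R.
Proof. by rewrite ltr0n; case: N i => [[]|]. Qed.

Lemma iN_le1 N (i : 'I_N) : (i.+1%:R / N%:R : R) <= 1.
Proof. by rewrite ler_pdivrMr ?mul1r ?ler_nat // (@N_pos N i). Qed.

Lemma iN_ge0 N (i : nat) : (0 : R) <= i%:R / N%:R.
Proof. by rewrite divr_ge0. Qed.

Lemma iN_le N (i : nat) : (i%:R / N%:R : R) <= i.+1%:R / N%:R.
Proof. by rewrite ler_wpM2r ?invr_ge0 // ler_nat. Qed.

Lemma low_incl N (i : 'I_N) :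
  Rect (i%:R / N%:R) (i%:R / N%:R) (i.+1%:R / N%:R) `<=` Hk k1 `&` Tset.
Proof.
have Ni := @N_pos N i; have i1 := @iN_le1 N i; have i0 := iN_ge0 N i; have ii := iN_le N i.
move=> w [[HB Gw] Ww].
have hk1j : forall j, 0 <= yk k1 j w < i%:R / N%:R.
  move=> j; have [_] := HB k1 I j I; rewrite /Bc hk1 eqxx /= in_itv /=.
  by [].
have /andP[Y1 Y2] : i%:R / N%:R <= Yt w < i.+1%:R / N%:R.
  by case: Ww => _; rewrite /= in_itv /=.
rewrite /yk in hk1j; rewrite /Yt in Y1 Y2.
have Ypos : 0 < (W w).2.
  have /andP[h1 h2] := hk1j (Ordinal (hn k1)); lra.
split.
  rewrite /Hk /Good; split; [split|] => //.
    move=> k _ j _; split => //=; case: (boolP ((k : nat) == 0%N)) => k0.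
      have kk : k = k1 by apply/eqP; rewrite k1E.
      subst k; have /andP[h1 h2] := hk1j j.
      rewrite /rng hk1 eqxx /= in_itv /=; apply/andP; split; lra.
    by have [_] := HB k I j I; rewrite /Bc (negbTE k0).
  split => //=; rewrite /trng hk1 eqxx /= in_itv /=; apply/andP; split; lra.
move=> j _; rewrite /Lt /yk /Yt /=; have /andP[h1 h2] := hk1j j; lra.
Qed.


Lemma up_incl N : (0 < N)%N -> Hk k1 `&` Tset `<=`
  \big[setU/set0]_(i < N) Rect (i.+1%:R / N%:R) (i%:R / N%:R) (i.+1%:R / N%:R).
Proof.
move=> N0 w [Hw Tw]; have [hr [Gw hY]] := @Hk_prop k1 w Hw.
have := trng_val hY; rewrite hk1 /= => /andP[Y1 Y2].
have Np : (0 : R) < N%:R by rewrite ltr0n.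
have x0 : 0 <= Yt w * N%:R by rewrite mulr_ge0 // ltW.
have /andP[t1 t2] := truncn_itv x0.
have iN : (Num.Def.trunc (Yt w * N%:R) < N)%N.
  by rewrite truncn_lt_nat // -ltr_pdivlMr // divff // gt_eqF.
apply/bigsetU_mem; exists (Ordinal iN) => /=.
set i := Num.Def.trunc _ in t1 t2 iN *.
have YiN : Yt w < i.+1%:R / N%:R by rewrite ltr_pdivlMr.
have iNY : i%:R / N%:R <= Yt w by rewrite ler_pdivrMr.
split; [split|] => //.
  move=> k _ j _; split => //=; case: (boolP ((k : nat) == 0%N)) => k0.
    have kk : k = k1 by apply/eqP; rewrite k1E.
    subst k; rewrite /Bc hk1 eqxx /= in_itv /=.
    have := rng_val (hr k1 j); rewrite hk1 eqxx => /andP[h1 h2].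
    have := Tw j I; rewrite /Lt /= => h3.
    rewrite /yk in h1 h2 h3; rewrite /Yt in YiN h3.
    apply/andP; split => //; lra.
  by rewrite /Bc (negbTE k0); exact: hr k j.
by split => //=; rewrite in_itv /=; apply/andP; split.
Qed.


Lemma Rect_triv N (c : 'I_N -> R) :
  trivIset setT (fun i : 'I_N => Rect (c i) (i%:R / N%:R) (i.+1%:R / N%:R)).
Proof.
move=> i j _ _ [w [[_ [_ Wi]] [_ [_ Wj]]]].
move: Wi Wj; rewrite /= !in_itv /= => /andP[a1 a2] /andP[b1 b2].
have Np : (0 : R) < N%:R by rewrite ltr0n; case: N i {a1 a2 b1 b2 c j} => [[]|].
have h1 : (i%:R / N%:R : R) < j.+1%:R / N%:R by apply: le_lt_trans b2.
have h2 : (j%:R / N%:R : R) < i.+1%:R / N%:R by apply: le_lt_trans a2.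
rewrite ltr_pM2r ?invr_gt0 // ltr_nat ltnS in h1.
rewrite ltr_pM2r ?invr_gt0 // ltr_nat ltnS in h2.
by apply: val_inj; apply/eqP; rewrite eqn_leq h1 h2.
Qed.

Lemma PU N (c : 'I_N -> R) : (forall i, 0 <= c i <= 1) ->
  P (\big[setU/set0]_(i < N) Rect (c i) (i%:R / N%:R) (i.+1%:R / N%:R))
  = (\sum_(i < N) (c i ^+ n k1) * (K%:R^-1 * N%:R^-1))%:E.
Proof.
move=> hc; rewrite measure_bigsetU_ord; last exact: Rect_triv.
  rewrite -sumEFin; apply: eq_bigr => i _.
  have /andP[c0 c1] := hc i.
  transitivity (P (Rect (c i) (i%:R / N%:R) (i.+1%:R / N%:R))); first by [].
  rewrite PRect ?iN_ge0 ?iN_le ?(@iN_le1 N i) //.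
  by rewrite -mulrBl -natrB // subSnn mul1r.
by move=> i; exact: mRect.
Qed.


Lemma sum_to_L (N : nat) (c : nat -> R) :
  \sum_(i < N) (c i ^+ n k1) * (K%:R^-1 * N%:R^-1) = K%:R^-1 * \sum_(i < N) c i ^+ n k1 / N%:R.
Proof. by rewrite mulr_sumr; apply: eq_bigr => i _; rewrite mulrCA. Qed.

Lemma PHT : P (Hk k1 `&` Tset) = (K%:R^-1 * (n k1).+1%:R^-1)%:E.
Proof.
have mHT : measurable (Hk k1 `&` Tset) by apply: measurableI; [exact: mHk | exact: mTset].
have p0 : (0 <= P (Hk k1 `&` Tset))%E := measure_ge0 _ _.
have p1 : (P (Hk k1 `&` Tset) <= 1)%E := probability_le1 P mHT.
have pfin : P (Hk k1 `&` Tset) = (fine (P (Hk k1 `&` Tset)))%:E.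
  by rewrite fineK // ge0_fin_numE // (le_lt_trans p1) ?ltry.
rewrite pfin; set p := fine _.
have K0 : (0 : R) < K%:R by rewrite ltr0n.
suff h : K%:R * p = (n k1).+1%:R^-1.
  by congr (_%:E); rewrite -h mulrA mulVf ?mul1r // gt_eqF.
apply: riemann_unique => N N0; apply/andP; split.
  have hU : (P (\big[setU/set0]_(i < N) Rect (i%:R / N%:R) (i%:R / N%:R) (i.+1%:R / N%:R))
            <= P (Hk k1 `&` Tset))%E.
    apply: le_measure; rewrite ?inE //.
      by apply: bigsetU_measurable => i _; exact: mRect.
    by move=> w /bigsetU_mem [i hi]; exact: low_incl hi.
  rewrite PU in hU; last first.
    move=> i; rewrite iN_ge0 /=; exact: le_trans (iN_le N i) (@iN_le1 N i).
  rewrite pfin lee_fin (sum_to_L N (fun i => i%:R / N%:R)) in hU.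
  by rewrite -ler_pdivrMl // mulrC.
have hU : (P (Hk k1 `&` Tset) <=
    P (\big[setU/set0]_(i < N) Rect (i.+1%:R / N%:R) (i%:R / N%:R) (i.+1%:R / N%:R)))%E.
  apply: le_measure; rewrite ?inE //.
    by apply: bigsetU_measurable => i _; exact: mRect.
  exact: up_incl.
rewrite PU in hU; last first.
  move=> i; rewrite (@iN_le1 N i) andbT; exact: le_trans (iN_ge0 N i) (iN_le N i).
rewrite pfin lee_fin (sum_to_L N (fun i => i.+1%:R / N%:R)) in hU.
by rewrite -ler_pdivlMl // mulrC.
Qed.


Definition gv (g : 'I_K) : R :=
  if g == k1 then K%:R^-1 - K%:R^-1 * (n k1).+1%:R^-1
  else if (g < m)%N then K%:R^-1 else 0.

Lemma HkD g : Hk g `<=` G @^-1` [set g].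
Proof. by move=> w [[_ h] _]. Qed.

Lemma group_val g : P (Ev `&` G @^-1` [set g]) = (gv g)%:E.
Proof.
rewrite (@null_red (G @^-1` [set g]) (Hk g) Ev (hGmeas g) (mHk g) mEv (@HkD g)); last first.
  by rewrite PHk hGlaw.
rewrite /gv; case: (boolP (g == k1)) => gk1.
  move/eqP: gk1 => ->.
  have -> : Ev `&` Hk k1 = Hk k1 `\` Tset.
    apply/seteqP; split => w /=.
      move=> [Ew Hw]; split => // Tw.
      have [j hj] := (@case_k1 w Hw).1 Ew; exact: hj (Tw j I).
    move=> [Hw nT]; split => //; apply/(@case_k1 w Hw).2.
    apply: contrapT => hnn; apply: nT => j _; apply: contrapT => hj; apply: hnn; by exists j.
  transitivity (P (Hk k1) - P (Hk k1 `&` Tset))%E.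
    rewrite measureD; [by []|exact: mHk|exact: mTset|].
    by apply: (le_lt_trans (probability_le1 P (mHk k1))); rewrite ltry.
  by rewrite PHk PHT -EFinB.
have g0 : (g : nat) != 0%N by rewrite -k1E.
case: (ltnP g m) => gm.
  have -> : Ev `&` Hk g = Hk g.
    apply/seteqP; split => w /=; first by case.
    by move=> Hw; split => //; exact: (@case_lower g w g0 gm Hw).
  exact: PHk.
have -> : Ev `&` Hk g = set0.
  apply/seteqP; split => w //= [Ew Hw]; exact: (@case_upper g w gm Hw Ew).
by rewrite measure0.
Qed.


Lemma main_thm : P [set w | (W w).2 \in
       gwcp_set n (fun _ => K%:R^-1) alpha (fun x y => y)
                (fun k j => Z k j w) (G w, (W w).1)]
  = (1 - alpha - (K%:R * ((n k1)%:R + 1))^-1)%:E.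
Proof.
rewrite E_eq.
have -> : Ev = \big[setU/set0]_(g < K) (Ev `&` G @^-1` [set g]).
  apply/seteqP; split => w.
    by move=> Ew; apply/bigsetU_mem; exists (G w).
  by move/bigsetU_mem => [g [Ew _]].
rewrite measure_bigsetU_ord; first last.
- by move=> i j _ _ [w [[_ hi] [_ hj]]]; rewrite -hi -hj.
- by move=> g; apply: measurableI; [exact: mEv | exact: hGmeas].
rewrite (eq_bigr (fun g => (gv g)%:E)); last first.
  move=> g _; transitivity (P (Ev `&` G @^-1` [set g])); first by [].
  exact: group_val.
rewrite sumEFin; congr (_%:E).
rewrite (bigD1 k1) //= {1}/gv eqxx.
have -> : \sum_(g < K | g != k1) gv g = (m%:R - 1) * K%:R^-1.
  rewrite -cnt2 mulr_suml; apply: eq_bigr => g gk; rewrite /gv (negbTE gk).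
  by case: ifP => _; rewrite ?mul1r ?mul0r.
rewrite tauE natr1 invfM.
have K0 : (K%:R : R) != 0 by rewrite gt_eqF // ltr0n.
field.
by rewrite K0 andbT addrC natr1 pnatr_eq0.
Qed.

End Main.

Theorem proposition2
  (R : realType) (d : measure_display) (T : measurableType d) (P : probability T R)
  (d1 : measure_display) (X1 : measurableType d1)
  (K : nat) (hK : (0 < K)%N) (alpha : R) (halpha : 0 < alpha < 1)
  (m : nat) (hm : (0 < m)%N) (hmK : (1 - alpha) * K%:R = m%:R)
  (n : 'I_K -> nat) (hn : forall k, (0 < n k)%N)
  (k1 : 'I_K) (hk1 : nat_of_ord k1 = 0%N) (hmin : forall k, (n k1 <= n k)%N)
  (Pi : 'I_K -> probability (X1 * R)%type R)
  (hPi1 : forall B, measurable B -> Pi k1 (setT `*` B) = unif01 B)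
  (hPi2 : forall (k : 'I_K) B, (1 <= k < m)%N -> measurable B ->
            Pi k (setT `*` B) = unifN10 B)
  (hPi3 : forall (k : 'I_K) B, (m <= k)%N -> measurable B ->
            Pi k (setT `*` B) = unif12 B)
  (Z : forall k : 'I_K, 'I_(n k) -> T -> (X1 * R)%type)
  (G : T -> 'I_K) (W : T -> (X1 * R)%type)
  (hZmeas : forall k j, measurable_fun setT (Z k j))
  (hGmeas : forall k, measurable (G @^-1` [set k]))
  (hWmeas : measurable_fun setT W)
  (hZlaw : forall k j A, measurable A -> P (Z k j @^-1` A) = Pi k A)
  (hGlaw : forall k, P (G @^-1` [set k]) = (K%:R^-1)%:E)
  (hWlaw : forall k A, measurable A ->
            P (G @^-1` [set k] `&` W @^-1` A) = ((K%:R^-1)%:E * Pi k A)%E)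
  (hind : independent_data P n Z G W) :
  P [set w | (W w).2 \in
       gwcp_set n (fun _ => K%:R^-1) alpha (fun x y => y)
                (fun k j => Z k j w) (G w, (W w).1)]
  = (1 - alpha - (K%:R * ((n k1)%:R + 1))^-1)%:E.
Proof.
apply: main_thm; eassumption.
Qed.
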